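(* Let $s\geq1$ be an integer, $\alpha'>\alpha>1$ and $\theta_1,\theta_2>0$. If $X$ has distribution $\Gamma(\alpha',\theta_1)$ and $Y$ has distribution $\Gamma(\alpha,\theta_2)$, then $X\leq_{s\text{-IFR}}Y$, i.e. the $\Gamma(\alpha',\theta_1)$ distribution is more $s$-IFR than the $\Gamma(\alpha,\theta_2)$ distribution.
   Context: $\Gamma(\alpha,\theta)$ is the Gamma distribution with density $\frac{x^{\alpha-1}e^{-x/\theta}}{\theta^\alpha\Gamma(\alpha)}$, $x>0$. For a nonnegative random variable $X$ with density $f_X$: $\overline{T}_{X,0}=f_X$, $\widetilde{\mu}_{X,0}=1$, and for $s\geq1$, $x\geq0$, $\overline{T}_{X,s}(x)=\frac{1}{\widetilde{\mu}_{X,s-1}}\int_x^\infty \overline{T}_{X,s-1}(t)\,dt$ with $\widetilde{\mu}_{X,s}=\int_0^\infty \overline{T}_{X,s}(t)\,dt$, and $\overline{T}_{X,s}(x)=1$ for $x<0$. We write $X\leq_{s\text{-IFR}}Y$ (''$X$ is more $s$-IFR than $Y$'') if $c_s(x)=\overline{T}_{Y,s}^{-1}(\overline{T}_{X,s}(x))$ is convex. *)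

(* Defs.v *)
From Stdlib Require Import Reals.
From Coquelicot Require Import Coquelicot.
Open Scope R_scope.

Definition int_from (f : R -> R) (a : R) : R :=
  RInt_gen f (at_point a) (Rbar_locally p_infty).

Definition Gamma_fun (a : R) : R :=
  int_from (fun t => Rpower t (a - 1) * exp (- t)) 0.

Definition gamma_density (alpha theta : R) (x : R) : R :=
  if Rlt_dec 0 x then
    Rpower x (alpha - 1) * exp (- x / theta) / (Rpower theta alpha * Gamma_fun alpha)
  else 0.

(* Iterated tail transforms  \overline{T}_{X,s}  of a density f:
   T_0 = f;  for s >= 1:  T_s(x) = 1 for x < 0, and
   T_s(x) = (1/mu_{s-1}) \int_x^oo T_{s-1}(t) dt for x >= 0,
   where mu_0 = 1 and mu_s = \int_0^oo T_s for s >= 1. *)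
Fixpoint tailT (f : R -> R) (s : nat) : R -> R :=
  match s with
  | O => f
  | S s' =>
      let mu := match s' with O => 1 | _ => int_from (tailT f s') 0 end in
      fun x => if Rlt_dec x 0 then 1 else int_from (tailT f s') x / mu
  end.

Definition tailmu (f : R -> R) (s : nat) : R :=
  match s with O => 1 | _ => int_from (tailT f s) 0 end.

Definition convex_on (D : R -> Prop) (g : R -> R) : Prop :=
  forall x y t, D x -> D y -> 0 <= t <= 1 ->
    g (t * x + (1 - t) * y) <= t * g x + (1 - t) * g y.

(* c is the function  c_s = T_{Y,s}^{-1} o T_{X,s}  on [0, oo):
   for x >= 0, c x is a point of [0, oo) where T_{Y,s} takes the value T_{X,s}(x). *)
Definition is_sIFR_comparison (fX fY : R -> R) (s : nat) (c : R -> R) : Prop :=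
  forall x, 0 <= x -> 0 <= c x /\ tailT fY s (c x) = tailT fX s x.

(* X <=_{s-IFR} Y : c_s exists and is convex (every such c is convex). *)
Definition more_sIFR (fX fY : R -> R) (s : nat) : Prop :=
  (exists c, is_sIFR_comparison fX fY s c) /\
  (forall c, is_sIFR_comparison fX fY s c -> convex_on (fun x => 0 <= x) c).

(* Main.v *)
Require Import Defs.
From Stdlib Require Import Reals.
From Coquelicot Require Import Coquelicot.
Open Scope R_scope.
From Stdlib Require Import Lra Psatz Classical FunctionalExtensionality List ClassicalEpsilon Lia.


Lemma MVT_open (f df : R -> R) (a b : R) :
  a < b ->
  (forall c, a < c < b -> is_derive f c (df c)) ->
  (forall c, a <= c <= b -> continuity_pt f c) ->
  exists c, a < c < b /\ f b - f a = df c * (b - a).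
Proof.
  intros Hab Hd Hc.
  assert (pr1 : forall c, a < c < b -> derivable_pt f c).
  { intros c Hc'. exists (df c). apply is_derive_Reals. now apply Hd. }
  assert (pr2 : forall c, a < c < b -> derivable_pt id c).
  { intros c _. apply derivable_pt_id. }
  destruct (MVT f id a b pr1 pr2 Hab Hc) as [c [P HP]].
  { intros c _. apply derivable_continuous_pt, derivable_pt_id. }
  exists c. split; [exact P|].
  rewrite (derive_pt_eq_0 f c (df c) (pr1 c P)) in HP.
  2: { apply is_derive_Reals. now apply Hd. }
  rewrite (derive_pt_eq_0 id c 1 (pr2 c P)) in HP.
  2: { apply derivable_pt_lim_id. }
  unfold id in HP. lra.
Qed.

Lemma exp_neg_le (x : R) : 0 <= x -> exp (- x) <= / (1 + x).
Proof.
  intros Hx. pose proof (exp_ineq1_le x).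
  rewrite exp_Ropp. apply Rinv_le_contravar; lra.
Qed.

Lemma cont_of_derive (f : R -> R) (x : R) : ex_derive f x -> continuous f x.
Proof.
  intros [l Hl]. apply continuity_pt_filterlim. apply derivable_continuous_pt.
  exists l. apply is_derive_Reals. exact Hl.
Qed.

Lemma exRc (g : R -> R) (a b : R) : (forall z, continuous g z) -> ex_RInt g a b.
Proof. intros H. apply (ex_RInt_continuous (V:=R_CompleteNormedModule)). intros; apply H. Qed.

Lemma is_RInt_expb (A beta u v : R) : beta > 0 ->
  is_RInt (fun t => A * exp (- (beta * t))) u v
     (A / beta * (exp (- (beta * u)) - exp (- (beta * v)))).
Proof.
  intros Hb.
  replace (A / beta * (exp (- (beta * u)) - exp (- (beta * v)))) with
    (minus ((fun t => - (A / beta) * exp (- (beta * t))) v)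
           ((fun t => - (A / beta) * exp (- (beta * t))) u)).
  2: { unfold minus, plus, opp; simpl. field. lra. }
  apply (is_RInt_derive (fun t => - (A / beta) * exp (- (beta * t)))).
  - intros x _. auto_derive; [exact I|]. field. lra.
  - intros x _. apply cont_of_derive. auto_derive. exact I.
Qed.

Lemma abs_RInt_bound (g : R -> R) (a A beta u v : R) : beta > 0 ->
  (forall x, continuous g x) ->
  (forall t, a <= t -> Rabs (g t) <= A * exp (- (beta * t))) ->
  a <= u <= v ->
  Rabs (RInt g u v) <= A / beta * exp (- (beta * u)).
Proof.
  intros Hb Hc Hg Huv.
  assert (HA : 0 <= A).
  { specialize (Hg a (Rle_refl a)). pose proof (Rabs_pos (g a)).
    pose proof (exp_pos (- (beta * a))). nra. }
  eapply Rle_trans. apply abs_RInt_le; [lra|].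
  apply exRc; auto.
  eapply Rle_trans. apply RInt_le with (g := fun t => A * exp (- (beta * t))); [lra| | | ].
  - apply exRc; intros. apply (continuous_comp g Rabs). auto. apply continuous_Rabs.
  - eexists. apply is_RInt_expb. lra.
  - intros x Hx. apply Hg. lra.
  - rewrite (is_RInt_unique _ _ _ _ (is_RInt_expb A beta u v Hb)).
    pose proof (exp_pos (- (beta * v))).
    assert (0 <= A / beta) by (apply Rdiv_le_0_compat; lra). nra.
Qed.

Lemma IG_lim (g : R -> R) (a A beta : R) : beta > 0 ->
  (forall x, continuous g x) ->
  (forall t, a <= t -> Rabs (g t) <= A * exp (- (beta * t))) ->
  exists l, filterlim (fun b => RInt g a b) (Rbar_locally p_infty) (locally l).
Proof.
  intros Hb Hc Hg.
  assert (HA : 0 <= A).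
  { specialize (Hg a (Rle_refl a)). pose proof (Rabs_pos (g a)).
    pose proof (exp_pos (- (beta * a))). nra. }
  apply (filterlim_locally_cauchy (F := Rbar_locally p_infty)).
  intros eps.
  set (M := Rmax (Rmax a 0) (A / (beta * beta * eps))).
  exists (fun x => M < x). split.
  { exists M. auto. }
  assert (key : forall u v, M < u -> u <= v -> Rabs (RInt g a v - RInt g a u) < eps).
  { intros u v Hu Huv.
    assert (Hau : a <= u). { unfold M in Hu. pose proof (Rmax_l (Rmax a 0) (A / (beta * beta * eps))). pose proof (Rmax_l a 0). lra. }
    assert (HCh : RInt g a u + RInt g u v = RInt g a v).
    { apply (RInt_Chasles g a u v); apply exRc; auto. }
    replace (RInt g a v - RInt g a u) with (RInt g u v) by lra.
    eapply Rle_lt_trans. apply (abs_RInt_bound g a A beta u v); auto; lra.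
    pose proof (Rmax_r (Rmax a 0) (A / (beta * beta * eps))) as H1.
    pose proof (Rmax_r a 0) as H2. pose proof (Rmax_l (Rmax a 0) (A / (beta * beta * eps))) as H3.
    fold M in H1, H3.
    pose proof (cond_pos eps) as He.
    assert (Hbu : 0 <= beta * u) by nra.
    pose proof (exp_neg_le _ Hbu) as Hx.
    assert (H4 : A / beta * exp (- (beta * u)) <= A / beta * / (1 + beta * u)).
    { apply Rmult_le_compat_l; [apply Rdiv_le_0_compat; lra| exact Hx]. }
    eapply Rle_lt_trans; [exact H4|].
    assert (Hu' : A / (beta * beta * eps) < u) by lra.
    apply Rmult_lt_reg_r with (beta * (1 + beta * u) * eps). 
    { apply Rmult_lt_0_compat; [nra|lra]. }
    replace (A / beta * / (1 + beta * u) * (beta * (1 + beta * u) * eps)) with (A * eps) by (field; split; nra).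
    assert (A < beta * beta * eps * u).
    { apply Rmult_lt_reg_r with (/ (beta * beta * eps)). apply Rinv_0_lt_compat. 
      apply Rmult_lt_0_compat; [nra|lra].
      replace (beta * beta * eps * u * / (beta * beta * eps)) with u by (field; split; lra).
      exact Hu'. }
    nra. }
  intros u v Hu Hv. change (Rabs (RInt g a v - RInt g a u) < eps).
  destruct (Rle_lt_dec u v) as [Huv|Huv].
  - apply key; auto.
  - rewrite Rabs_minus_sym. apply key; auto; lra.
Qed.

Lemma is_RInt_gen_of_lim (g : R -> R) (a l : R) :
  (forall x, continuous g x) ->
  filterlim (fun b => RInt g a b) (Rbar_locally p_infty) (locally l) ->
  is_RInt_gen g (at_point a) (Rbar_locally p_infty) l.
Proof.
  intros Hc Hl P HP.
  specialize (Hl _ HP). destruct Hl as [M HM].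
  apply Filter_prod with (Q := fun x => x = a) (R := fun b => M < b).
  - reflexivity.
  - exists M. auto.
  - intros x y Hx Hy. subst x. exists (RInt g a y). split.
    + apply (RInt_correct (V:=R_CompleteNormedModule)). apply exRc; auto.
    + apply HM; auto.
Qed.

Lemma IG (g : R -> R) (a A beta : R) : beta > 0 ->
  (forall x, continuous g x) ->
  (forall t, a <= t -> Rabs (g t) <= A * exp (- (beta * t))) ->
  filterlim (fun b => RInt g a b) (Rbar_locally p_infty) (locally (int_from g a)) /\
  is_RInt_gen g (at_point a) (Rbar_locally p_infty) (int_from g a).
Proof.
  intros Hb Hc Hg.
  destruct (IG_lim g a A beta Hb Hc Hg) as [l Hl].
  assert (H : is_RInt_gen g (at_point a) (Rbar_locally p_infty) l) by (apply is_RInt_gen_of_lim; auto).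
  assert (E : int_from g a = l).
  { unfold int_from. apply (is_RInt_gen_unique (V:=R_CompleteNormedModule)). exact H. }
  rewrite E. auto.
Qed.

Lemma lim_ge (F : R -> R) (l lo M : R) :
  filterlim F (Rbar_locally p_infty) (locally l) ->
  (forall b, M < b -> lo <= F b) -> lo <= l.
Proof.
  intros Hl HF. destruct (Rle_lt_dec lo l) as [H|H]; auto.
  assert (He : 0 < lo - l) by lra.
  destruct (Hl (fun y => Rabs (y - l) < lo - l)) as [N HN].
  { exists (mkposreal _ He). intros y Hy. exact Hy. }
  set (b := Rmax M N + 1).
  assert (M < b) by (unfold b; pose proof (Rmax_l M N); lra).
  assert (N < b) by (unfold b; pose proof (Rmax_r M N); lra).
  specialize (HN b H1). specialize (HF b H0).
  apply Rabs_def2 in HN. lra.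
Qed.

Lemma lim_le (F : R -> R) (l hi M : R) :
  filterlim F (Rbar_locally p_infty) (locally l) ->
  (forall b, M < b -> F b <= hi) -> l <= hi.
Proof.
  intros Hl HF. destruct (Rle_lt_dec l hi) as [H|H]; auto.
  assert (He : 0 < l - hi) by lra.
  destruct (Hl (fun y => Rabs (y - l) < l - hi)) as [N HN].
  { exists (mkposreal _ He). intros y Hy. exact Hy. }
  set (b := Rmax M N + 1).
  assert (M < b) by (unfold b; pose proof (Rmax_l M N); lra).
  assert (N < b) by (unfold b; pose proof (Rmax_r M N); lra).
  specialize (HN b H1). specialize (HF b H0).
  apply Rabs_def2 in HN. lra.
Qed.

Lemma int_from_chasles (g : R -> R) (a b a0 A beta : R) : beta > 0 ->
  (forall x, continuous g x) ->
  (forall t, a0 <= t -> Rabs (g t) <= A * exp (- (beta * t))) ->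
  a0 <= b ->
  int_from g a = RInt g a b + int_from g b.
Proof.
  intros Hb Hc Hg Hab.
  assert (H1 : is_RInt_gen g (at_point a) (at_point b) (RInt g a b)).
  { apply is_RInt_gen_at_point. apply (RInt_correct (V:=R_CompleteNormedModule)). apply exRc; auto. }
  assert (H2 : is_RInt_gen g (at_point b) (Rbar_locally p_infty) (int_from g b)).
  { apply (IG g b A beta); auto. intros; apply Hg; lra. }
  pose proof (is_RInt_gen_Chasles g b _ _ H1 H2) as H3.
  unfold int_from at 1. apply (is_RInt_gen_unique (V:=R_CompleteNormedModule)). exact H3.
Qed.

Lemma int_from_bounds (g : R -> R) (a A beta : R) : beta > 0 ->
  (forall x, continuous g x) ->
  (forall t, a <= t -> 0 <= g t) ->
  (forall t, a <= t -> g t <= A * exp (- (beta * t))) ->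
  0 <= int_from g a <= A / beta * exp (- (beta * a)).
Proof.
  intros Hb Hc H0 Hg.
  assert (Hg' : forall t, a <= t -> Rabs (g t) <= A * exp (- (beta * t))).
  { intros t Ht. rewrite Rabs_pos_eq; auto. }
  destruct (IG g a A beta Hb Hc Hg') as [Hl _].
  split.
  - apply (lim_ge _ _ 0 a Hl). intros b Hb'. apply RInt_ge_0; [lra| apply exRc; auto |].
    intros x Hx; apply H0; lra.
  - apply (lim_le _ _ _ a Hl). intros b Hb'.
    eapply Rle_trans; [apply Rle_abs|]. apply (abs_RInt_bound g a A beta a b); auto; lra.
Qed.

Lemma int_from_pos (g : R -> R) (a A beta : R) : beta > 0 ->
  (forall x, continuous g x) ->
  (forall t, a < t -> 0 < g t) ->
  (forall t, a <= t -> 0 <= g t) ->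
  (forall t, a <= t -> g t <= A * exp (- (beta * t))) ->
  0 < int_from g a.
Proof.
  intros Hb Hc Hp H0 Hg.
  assert (Hg' : forall t, a <= t -> Rabs (g t) <= A * exp (- (beta * t))).
  { intros t Ht. rewrite Rabs_pos_eq; auto. }
  rewrite (int_from_chasles g a (a+1) a A beta); auto; try lra.
  assert (0 < RInt g a (a+1)).
  { apply RInt_gt_0; [lra| |]. intros; apply Hp; lra. intros; apply Hc. }
  assert (0 <= int_from g (a+1)).
  { apply (int_from_bounds g (a+1) A beta); auto; intros; [apply H0|apply Hg]; lra. }
  lra.
Qed.

Definition Good (g : R -> R) (A beta : R) : Prop :=
  (forall x, continuous g x) /\ (forall x, 0 < x -> 0 < g x) /\ (forall x, 0 <= g x) /\
  (forall x, 0 <= x -> g x <= A * exp (- (beta * x))).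

Lemma is_derive_RInt0 (g : R -> R) (x : R) : (forall z, continuous g z) ->
  is_derive (fun b => RInt g 0 b) x (g x).
Proof.
  intros Hc. apply (is_derive_RInt (V:=R_CompleteNormedModule) g (fun b => RInt g 0 b) 0 x).
  - apply filter_forall. intros b. apply (RInt_correct (V:=R_CompleteNormedModule)). apply exRc; auto.
  - apply Hc.
Qed.

Lemma cont_pt_of (f : R -> R) (x : R) : continuous f x -> continuity_pt f x.
Proof. intros H. apply continuity_pt_filterlim. exact H. Qed.

Lemma next_level (g h : R -> R) (A beta : R) : beta > 0 -> Good g A beta ->
  (forall x, h x = if Rlt_dec x 0 then 1 else int_from g x / int_from g 0) ->
  0 < int_from g 0 /\ Good h (A / (beta * int_from g 0)) beta /\
  (forall x, x <= 0 -> h x = 1) /\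
  (forall x, 0 < x -> is_derive h x (- g x / int_from g 0)) /\
  (forall x y, 0 <= x < y -> h y < h x).
Proof.
  intros Hb [Hc [Hp [H0 Hg]]] Hh.
  assert (Hg' : forall t, 0 <= t -> Rabs (g t) <= A * exp (- (beta * t))).
  { intros t Ht. rewrite Rabs_pos_eq; auto. }
  set (m := int_from g 0).
  assert (Hm : 0 < m).
  { apply (int_from_pos g 0 A beta); auto. }
  set (phi := fun b => RInt g 0 b).
  assert (Hphi : forall x, is_derive phi x (g x)) by (intros; apply is_derive_RInt0; auto).
  assert (Hpos : forall x, 0 <= x -> h x = 1 - phi x / m).
  { intros x Hx. rewrite Hh. destruct (Rlt_dec x 0) as [H|H]; [lra|].
    unfold m. rewrite (int_from_chasles g 0 x 0 A beta); auto. unfold phi. field.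
    fold m. rewrite <- (int_from_chasles g 0 x 0 A beta); auto. fold m. lra. }
  assert (Hneg : forall x, x <= 0 -> h x = 1).
  { intros x Hx. destruct (Req_dec x 0) as [->|Hx0].
    - rewrite Hpos; [|lra]. unfold phi. rewrite RInt_point. unfold zero; simpl. field. lra.
    - rewrite Hh. destruct (Rlt_dec x 0); [reflexivity|lra]. }
  assert (Hext : h = fun x => 1 - phi ((x + Rabs x) / 2) / m).
  { apply functional_extensionality. intros x.
    destruct (Rle_lt_dec 0 x) as [Hx|Hx].
    - rewrite Rabs_pos_eq; auto. rewrite Hpos; auto. do 3 f_equal. field.
    - rewrite Rabs_left; auto. rewrite Hneg; [|lra].
      replace ((x + - x) / 2) with 0 by field. unfold phi. rewrite RInt_point. unfold zero; simpl. field. lra. }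
  assert (Hhc : forall x, continuous h x).
  { intros x. rewrite Hext.
    apply (continuous_minus (fun _ => 1) (fun x => phi ((x + Rabs x) / 2) / m)).
    apply continuous_const.
    apply (continuous_scal_l (fun x => phi ((x + Rabs x) / 2)) (/ m)).
    apply (continuous_comp (fun x => (x + Rabs x) / 2) phi).
    - apply (continuous_scal_l (fun x => x + Rabs x) (/2)).
      apply (continuous_plus (fun x => x) Rabs). apply continuous_id. apply continuous_Rabs.
    - apply cont_of_derive. eexists. apply Hphi. }
  assert (Hd : forall x, 0 < x -> is_derive h x (- g x / m)).
  { intros x Hx.
    apply (is_derive_ext_loc (fun t => 1 - phi t / m)).
    - assert (Hx' : 0 < x) by exact Hx.
      exists (mkposreal x Hx'). intros t Ht. 
      unfold ball in Ht; simpl in Ht; unfold AbsRing_ball, abs, minus, plus, opp in Ht; simpl in Ht.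
      apply Rabs_def2 in Ht. rewrite Hpos; [reflexivity|lra].
    - assert (Dphi : Derive phi x = g x) by (apply is_derive_unique; apply Hphi).
      auto_derive.
      + exists (g x). apply Hphi.
      + change (fun x : R => phi x) with phi. rewrite Dphi. field. lra. }
  assert (Hdec : forall x y, 0 <= x < y -> h y < h x).
  { intros x y Hxy.
    destruct (MVT_open h (fun t => - g t / m) x y) as [c [Hc1 Hc2]]; try lra.
    - intros c Hc'. apply Hd. lra.
    - intros c _. apply cont_pt_of. apply Hhc.
    - assert (0 < g c) by (apply Hp; lra).
      assert (- g c / m * (y - x) < 0).
      { assert (0 < g c / m) by (apply Rdiv_lt_0_compat; lra).
        replace (- g c / m) with (- (g c / m)) by (field; lra). nra. }
      lra. }
  split; [exact Hm|]. split; [|split; [exact Hneg|split; [exact Hd|exact Hdec]]].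
  split; [exact Hhc|]. 
  assert (Hpos' : forall x, 0 < h x).
  { intros x. rewrite Hh. destruct (Rlt_dec x 0); [lra|].
    apply Rdiv_lt_0_compat; auto.
    apply (int_from_pos g x A beta); auto.
    - intros t Ht; apply Hp; lra.
    - intros t Ht; apply Hg; lra. }
  split; [intros; apply Hpos'|]. split; [intros; left; apply Hpos'|].
  intros x Hx. rewrite Hh. destruct (Rlt_dec x 0); [lra|].
  destruct (int_from_bounds g x A beta Hb Hc) as [_ Hub].
  - intros; auto.
  - intros; apply Hg; lra.
  - fold m. replace (A / (beta * m) * exp (- (beta * x))) with (A / beta * exp (- (beta * x)) / m) by (field; lra).
    apply Rmult_le_compat_r; [left; apply Rinv_0_lt_compat; lra| exact Hub].
Qed.


Definition pg (al th x : R) : R :=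
  if Rlt_dec 0 x then Rpower x (al - 1) * exp (- x / th) else 0.

Lemma pg_cont (al th : R) : 1 < al -> 0 < th -> forall x, continuous (pg al th) x.
Proof.
  intros Hal Hth x.
  destruct (Rtotal_order x 0) as [Hx|[Hx|Hx]].
  - apply (continuous_ext_loc _ (fun _ => 0)).
    + exists (mkposreal (- x) ltac:(lra)). intros t Ht.
      unfold ball in Ht; simpl in Ht; unfold AbsRing_ball, abs, minus, plus, opp in Ht; simpl in Ht.
      apply Rabs_def2 in Ht. unfold pg. destruct (Rlt_dec 0 t); [lra|reflexivity].
    + apply continuous_const.
  - subst x. apply continuity_pt_filterlim.
    unfold continuity_pt, continue_in, limit1_in, limit_in. intros eps Heps.
    exists (Rpower eps (/ (al - 1))). split.
    { unfold Rpower. apply exp_pos. }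
    intros t [_ Ht]. simpl in Ht |- *. unfold R_dist in Ht |- *.
    unfold pg at 2. destruct (Rlt_dec 0 0); [lra|]. rewrite Rminus_0_r.
    unfold pg. destruct (Rlt_dec 0 t) as [Ht0|Ht0].
    + rewrite Rminus_0_r in Ht. rewrite Rabs_pos_eq in Ht by lra.
      assert (H1 : Rpower t (al - 1) < eps).
      { replace eps with (Rpower (Rpower eps (/ (al - 1))) (al - 1)).
        apply Rlt_Rpower_l; [lra|]. split; auto.
        rewrite Rpower_mult. replace (/ (al - 1) * (al - 1)) with 1 by (field; lra).
        apply Rpower_1; lra. }
      assert (H2 : exp (- t / th) <= 1).
      { rewrite <- exp_0. destruct (Req_dec (- t / th) 0) as [E|E]; [rewrite E; lra|].
        left. apply exp_increasing. assert (0 < t / th) by (apply Rdiv_lt_0_compat; lra).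
        replace (- t / th) with (- (t / th)) by (field; lra). lra. }
      assert (H3 : 0 < Rpower t (al - 1)) by (unfold Rpower; apply exp_pos).
      pose proof (exp_pos (- t / th)).
      rewrite Rabs_pos_eq by nra. nra.
    + rewrite Rabs_R0. exact Heps.
  - apply (continuous_ext_loc _ (fun t => exp ((al - 1) * ln t) * exp (- t / th))).
    + exists (mkposreal x Hx). intros t Ht.
      unfold ball in Ht; simpl in Ht; unfold AbsRing_ball, abs, minus, plus, opp in Ht; simpl in Ht.
      apply Rabs_def2 in Ht. unfold pg. destruct (Rlt_dec 0 t); [reflexivity|lra].
    + apply cont_of_derive. auto_derive. lra.
Qed.

Lemma pg_pos (al th x : R) : 0 < x -> 0 < pg al th x.
Proof.
  intros Hx. unfold pg. destruct (Rlt_dec 0 x); [|lra].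
  unfold Rpower. apply Rmult_lt_0_compat; apply exp_pos.
Qed.

Lemma pg_nonneg (al th x : R) : 0 <= pg al th x.
Proof.
  unfold pg. destruct (Rlt_dec 0 x); [|lra].
  unfold Rpower. left. apply Rmult_lt_0_compat; apply exp_pos.
Qed.

Lemma pg_bound (al th : R) : 1 < al -> 0 < th ->
  exists B, forall x, 0 <= x -> pg al th x <= B * exp (- (/ (2 * th) * x)).
Proof.
  intros Hal Hth.
  set (p := al - 1). set (q := / (2 * th)).
  assert (Hp : 0 < p) by (unfold p; lra).
  assert (Hq : 0 < q) by (unfold q; apply Rinv_0_lt_compat; lra).
  exists (exp (- p - p * ln (q / p))).
  intros x Hx. unfold pg. destruct (Rlt_dec 0 x) as [Hx0|Hx0].
  2: { left. apply Rmult_lt_0_compat; apply exp_pos. }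
  unfold Rpower. rewrite <- !exp_plus.
  assert (Hln : ln (q * x / p) <= q * x / p - 1).
  { pose proof (exp_ineq1_le (ln (q * x / p))). rewrite exp_ln in H.
    lra. apply Rdiv_lt_0_compat; [nra|lra]. }
  rewrite ln_div in Hln by nra. rewrite ln_mult in Hln by lra.
  rewrite ln_div by lra.
  assert (E : x / th = 2 * q * x) by (unfold q; field; lra).
  match goal with |- exp ?a <= exp ?b => assert (a <= b) end.
  { replace (- x / th) with (- (2 * q * x)) by (rewrite <- E; field; lra).
    assert (p * ln x <= p * (q * x / p - 1 - ln q + ln p)).
    { apply Rmult_le_compat_l; lra. }
    replace (p * (q * x / p - 1 - ln q + ln p)) with (q * x - p - p * ln q + p * ln p) in H by (field; lra).
    fold p. lra. }
  destruct H as [H|H]; [left; apply exp_increasing; exact H| rewrite H; lra].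
Qed.

Lemma pg_absbound (al th : R) : 1 < al -> 0 < th ->
  exists B, forall x, 0 <= x -> Rabs (pg al th x) <= B * exp (- (/ (2 * th) * x)).
Proof.
  intros Hal Hth. destruct (pg_bound al th Hal Hth) as [B HB]. exists B.
  intros x Hx. rewrite Rabs_pos_eq by apply pg_nonneg. auto.
Qed.

Lemma pg_IG (al th : R) : 1 < al -> 0 < th ->
  filterlim (fun b => RInt (pg al th) 0 b) (Rbar_locally p_infty) (locally (int_from (pg al th) 0)) /\
  is_RInt_gen (pg al th) (at_point 0) (Rbar_locally p_infty) (int_from (pg al th) 0).
Proof.
  intros Hal Hth. destruct (pg_absbound al th Hal Hth) as [B HB].
  apply (IG _ 0 B (/ (2 * th))).
  - apply Rinv_0_lt_compat; lra.
  - apply pg_cont; auto.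
  - auto.
Qed.

Lemma Gamma_eq (al : R) : 1 < al -> Gamma_fun al = int_from (pg al 1) 0.
Proof.
  intros Hal. destruct (pg_IG al 1 Hal ltac:(lra)) as [_ H].
  unfold Gamma_fun, int_from at 1.
  apply (is_RInt_gen_unique (V:=R_CompleteNormedModule)).
  eapply (is_RInt_gen_ext (pg al 1)); [| exact H].
  apply Filter_prod with (Q := fun x => x = 0) (R := fun b => 0 < b).
  - reflexivity.
  - exists 0. auto.
  - intros x y Hx Hy t Ht. simpl in Ht. subst x.
    rewrite Rmin_left in Ht by lra. rewrite Rmax_right in Ht by lra.
    unfold pg. destruct (Rlt_dec 0 t); [|lra]. f_equal. f_equal. field.
Qed.

Lemma Gamma_pos (al : R) : 1 < al -> 0 < Gamma_fun al.
Proof.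
  intros Hal. rewrite Gamma_eq by auto.
  destruct (pg_bound al 1 Hal ltac:(lra)) as [B HB].
  apply (int_from_pos _ 0 B (/ (2 * 1))).
  - apply Rinv_0_lt_compat; lra.
  - apply pg_cont; lra.
  - intros; apply pg_pos; auto.
  - intros; apply pg_nonneg.
  - auto.
Qed.

Lemma pg_scale (al th y : R) : 0 < th ->
  th * pg al th (th * y + 0) = Rpower th al * pg al 1 y.
Proof.
  intros Hth. unfold pg.
  destruct (Rlt_dec 0 (th * y + 0)) as [H1|H1]; destruct (Rlt_dec 0 y) as [H2|H2].
  - rewrite Rplus_0_r. rewrite <- Rpower_mult_distr by lra.
    assert (E : Rpower th (1 + (al - 1)) = th * Rpower th (al - 1)) by (rewrite Rpower_plus, Rpower_1; lra).
    replace (1 + (al - 1)) with al in E by ring. rewrite E.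
    replace (- (th * y) / th) with (- y / 1) by (field; lra). ring.
  - exfalso. nra.
  - exfalso. nra.
  - ring.
Qed.

Lemma pg_RInt_scale (al th b : R) : 1 < al -> 0 < th ->
  RInt (pg al th) 0 b = Rpower th al * RInt (pg al 1) 0 (b / th).
Proof.
  intros Hal Hth.
  pose proof (RInt_comp_lin (V:=R_CompleteNormedModule) (pg al th) th 0 0 (b / th)) as H.
  replace (th * 0 + 0) with 0 in H by ring.
  replace (th * (b / th) + 0) with b in H by (field; lra).
  rewrite <- H by (apply exRc; apply pg_cont; auto).
  rewrite <- (RInt_scal (V:=R_CompleteNormedModule)) by (apply exRc; apply pg_cont; lra).
  apply RInt_ext. intros x _. unfold scal; simpl; unfold mult; simpl. apply pg_scale; auto.
Qed.

Lemma cont_mult_const (K l : R) : continuous (fun y => K * y) l.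
Proof. apply cont_of_derive. auto_derive. exact I. Qed.

Lemma pg_int (al th : R) : 1 < al -> 0 < th ->
  int_from (pg al th) 0 = Rpower th al * Gamma_fun al.
Proof.
  intros Hal Hth.
  destruct (pg_IG al 1 Hal ltac:(lra)) as [H1 _].
  rewrite <- Gamma_eq in H1 by auto.
  assert (H2 : filterlim (fun b => RInt (pg al th) 0 b) (Rbar_locally p_infty)
                 (locally (Rpower th al * Gamma_fun al))).
  { eapply filterlim_ext. { intros b. symmetry. apply pg_RInt_scale; auto. }
    apply (filterlim_comp _ _ _ (fun b => RInt (pg al 1) 0 (b / th)) (fun y => Rpower th al * y)
             _ (locally (Gamma_fun al))).
    - apply (filterlim_comp _ _ _ (fun b => b / th) (fun b => RInt (pg al 1) 0 b) _ (Rbar_locally p_infty)).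
      + intros P [M HM]. exists (M * th). intros x Hx. apply HM.
        apply Rmult_lt_reg_r with th; auto. replace (x / th * th) with x by (field; lra). lra.
      + exact H1.
    - apply cont_mult_const. }
  assert (H3 := is_RInt_gen_of_lim (pg al th) 0 _ (pg_cont al th Hal Hth) H2).
  unfold int_from. apply (is_RInt_gen_unique (V:=R_CompleteNormedModule)). exact H3.
Qed.

Lemma gd_eq (al th : R) : gamma_density al th = fun x => pg al th x / (Rpower th al * Gamma_fun al).
Proof.
  apply functional_extensionality. intros x. unfold gamma_density, pg.
  destruct (Rlt_dec 0 x); [reflexivity|]. unfold Rdiv. ring.
Qed.

Lemma K_pos (al th : R) : 1 < al -> 0 < th -> 0 < Rpower th al * Gamma_fun al.
Proof.
  intros. apply Rmult_lt_0_compat; [unfold Rpower; apply exp_pos| apply Gamma_pos; auto].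
Qed.

Lemma gd_good (al th : R) : 1 < al -> 0 < th ->
  exists A, Good (gamma_density al th) A (/ (2 * th)).
Proof.
  intros Hal Hth. pose proof (K_pos al th Hal Hth) as HK.
  set (K := Rpower th al * Gamma_fun al) in *.
  destruct (pg_bound al th Hal Hth) as [B HB].
  exists (B / K). rewrite gd_eq. fold K.
  split; [|split; [|split]].
  - intros x. replace (fun x => pg al th x / K) with (fun x => / K * pg al th x).
    2: { apply functional_extensionality; intros; unfold Rdiv; ring. }
    apply (continuous_comp (pg al th) (fun y => / K * y)). apply pg_cont; auto. apply cont_mult_const.
  - intros x Hx. apply Rdiv_lt_0_compat; auto. apply pg_pos; auto.
  - intros x. apply Rdiv_le_0_compat; auto. apply pg_nonneg.
  - intros x Hx. specialize (HB x Hx).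
    replace (B / K * exp (- (/ (2 * th) * x))) with (B * exp (- (/ (2 * th) * x)) / K) by (field; lra).
    apply Rmult_le_compat_r; [left; apply Rinv_0_lt_compat; auto| auto].
Qed.

Lemma gd_int (al th : R) : 1 < al -> 0 < th -> int_from (gamma_density al th) 0 = 1.
Proof.
  intros Hal Hth. pose proof (K_pos al th Hal Hth) as HK.
  destruct (pg_IG al th Hal Hth) as [_ H].
  rewrite pg_int in H by auto.
  pose proof (is_RInt_gen_scal (pg al th) (/ (Rpower th al * Gamma_fun al)) _ H) as H2.
  unfold int_from. apply (is_RInt_gen_unique (V:=R_CompleteNormedModule)).
  replace 1 with (scal (/ (Rpower th al * Gamma_fun al)) (Rpower th al * Gamma_fun al)).
  2: { unfold scal; simpl; unfold mult; simpl. apply Rinv_l. lra. }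
  rewrite gd_eq. 
  replace (fun x => pg al th x / (Rpower th al * Gamma_fun al)) with
    (fun y => scal (/ (Rpower th al * Gamma_fun al)) (pg al th y)).
  exact H2.
  apply functional_extensionality. intros y. unfold scal; simpl; unfold mult; simpl. unfold Rdiv. ring.
Qed.

Lemma gd_log (al th x : R) : 1 < al -> 0 < th -> 0 < x ->
  gamma_density al th x = exp ((al - 1) * ln x + (- x / th) - ln (Rpower th al * Gamma_fun al)).
Proof.
  intros Hal Hth Hx. pose proof (K_pos al th Hal Hth) as HK.
  unfold gamma_density. destruct (Rlt_dec 0 x); [|lra].
  set (K := Rpower th al * Gamma_fun al) in *.
  unfold Rdiv. rewrite <- (exp_ln K) at 1 by auto. rewrite <- exp_Ropp.
  unfold Rpower. rewrite <- !exp_plus. f_equal.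
Qed.


Lemma tailS_eq (f : R -> R) (k : nat) (x : R) : int_from f 0 = 1 ->
  tailT f (S k) x = if Rlt_dec x 0 then 1 else int_from (tailT f k) x / int_from (tailT f k) 0.
Proof.
  intros H1. destruct k; simpl; [rewrite H1|]; reflexivity.
Qed.

Lemma tail_all (f : R -> R) (A beta : R) : beta > 0 -> Good f A beta -> int_from f 0 = 1 ->
  forall k, exists A', Good (tailT f k) A' beta /\ 0 < int_from (tailT f k) 0 /\
    (forall x, x <= 0 -> tailT f (S k) x = 1) /\
    (forall x, 0 < x -> is_derive (tailT f (S k)) x (- tailT f k x / int_from (tailT f k) 0)) /\
    (forall x y, 0 <= x < y -> tailT f (S k) y < tailT f (S k) x).
Proof.
  intros Hb Hg H1 k. induction k as [|k IH].
  - destruct (next_level f (tailT f 1) A beta Hb Hg) as [Hm [_ [Ha [Hd Hdec]]]].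
    { intros x. apply tailS_eq; auto. }
    exists A. split; [exact Hg|]. split; [exact Hm|]. split; [exact Ha|]. split; [exact Hd|exact Hdec].
  - destruct IH as [A' [Hg' _]].
    destruct (next_level (tailT f k) (tailT f (S k)) A' beta Hb Hg') as [Hm [Hg2 _]].
    { intros x. apply tailS_eq; auto. }
    destruct (next_level (tailT f (S k)) (tailT f (S (S k))) _ beta Hb Hg2) as [Hm2 [_ [Ha [Hd Hdec]]]].
    { intros x. apply tailS_eq; auto. }
    eexists. split; [exact Hg2|]. split; [exact Hm2|]. split; [exact Ha|]. split; [exact Hd|exact Hdec].
Qed.

Lemma good_lim0 (g : R -> R) (A beta : R) : beta > 0 -> Good g A beta ->
  filterlim g (Rbar_locally p_infty) (locally 0).
Proof.
  intros Hb [_ [_ [H0 Hg]]] P [eps HP].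
  assert (HA : 0 <= A).
  { specialize (Hg 0 (Rle_refl 0)). pose proof (H0 0). pose proof (exp_pos (- (beta * 0))). nra. }
  pose proof (cond_pos eps) as He.
  exists (Rmax 0 (A / (beta * eps))). intros x Hx.
  apply HP. unfold ball; simpl; unfold AbsRing_ball, abs, minus, plus, opp; simpl.
  pose proof (Rmax_l 0 (A / (beta * eps))) as Hm1. pose proof (Rmax_r 0 (A / (beta * eps))) as Hm2.
  rewrite Ropp_0, Rplus_0_r, Rabs_pos_eq by auto.
  eapply Rle_lt_trans. apply Hg; lra.
  assert (Hbx : 0 <= beta * x) by nra.
  pose proof (exp_neg_le _ Hbx) as Hex.
  assert (H4 : A * exp (- (beta * x)) <= A * / (1 + beta * x)) by (apply Rmult_le_compat_l; auto).
  eapply Rle_lt_trans; [exact H4|].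
  assert (A < beta * eps * x).
  { assert (H5 : A / (beta * eps) < x) by lra.
    apply Rmult_lt_reg_r with (/ (beta * eps)). apply Rinv_0_lt_compat; nra.
    replace (beta * eps * x * / (beta * eps)) with x by (field; split; lra). exact H5. }
  apply Rmult_lt_reg_r with (1 + beta * x); [nra|].
  replace (A * / (1 + beta * x) * (1 + beta * x)) with A by (field; nra). nra.
Qed.


Fixpoint alt (D : R -> R) (s lo : R) (l : list R) : Prop :=
  match l with
  | nil => True
  | p :: l' => lo < p /\ s * D p > 0 /\ alt D (- s) p l'
  end.

Lemma alt_weaken (D : R -> R) (s lo lo' : R) (l : list R) :
  alt D s lo l -> lo' <= lo -> alt D s lo' l.
Proof.
  destruct l as [|p l]; simpl; auto. intros [H1 H2] H3. split; [lra|auto].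
Qed.

Lemma cont_pt_of_derive (F : R -> R) (z l : R) : is_derive F z l -> continuity_pt F z.
Proof. intros H. apply derivable_continuous_pt. exists l. apply is_derive_Reals. exact H. Qed.

Lemma MVT_sign (F G : R -> R) (C u v s : R) : C > 0 -> u < v ->
  (forall z, u < z < v -> is_derive F z (- C * G z)) ->
  (forall z, u <= z <= v -> continuity_pt F z) ->
  s * (F v - F u) < 0 -> exists q, u < q < v /\ s * G q > 0.
Proof.
  intros HC Huv Hd Hc Hs.
  destruct (MVT_open F (fun z => - C * G z) u v Huv Hd Hc) as [q [Hq E]].
  exists q. split; auto. rewrite E in Hs.
  assert (0 < C * (v - u)) by nra.
  nra.
Qed.

Lemma tail_sign (F G : R -> R) (C lo p s : R) : C > 0 ->
  (forall z, lo < z -> is_derive F z (- C * G z)) ->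
  filterlim F (Rbar_locally p_infty) (locally 0) ->
  lo < p -> s * F p > 0 -> exists q, p < q /\ s * G q > 0.
Proof.
  intros HC Hd Hl Hp Hs.
  assert (HFp : 0 < Rabs (F p)).
  { apply Rabs_pos_lt. intros E. rewrite E in Hs. lra. }
  destruct (Hl (fun y => Rabs y < Rabs (F p))) as [M HM].
  { exists (mkposreal _ HFp). intros y Hy. unfold ball in Hy; simpl in Hy.
    unfold AbsRing_ball, abs, minus, plus, opp in Hy; simpl in Hy.
    rewrite Ropp_0, Rplus_0_r in Hy. exact Hy. }
  set (w := Rmax M p + 1).
  assert (Hw1 : p < w) by (unfold w; pose proof (Rmax_r M p); lra).
  assert (Hw2 : M < w) by (unfold w; pose proof (Rmax_l M p); lra).
  specialize (HM w Hw2).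
  destruct (MVT_sign F G C p w s HC Hw1) as [q [Hq Hq']].
  - intros z Hz. apply Hd. lra.
  - intros z Hz. apply (cont_pt_of_derive F z (- C * G z)). apply Hd. lra.
  - assert (Rabs (s * F w) < s * F p).
    { rewrite Rabs_mult. rewrite <- (Rabs_pos_eq (s * F p)) by lra. rewrite Rabs_mult.
      apply Rmult_lt_compat_l; auto. apply Rabs_pos_lt. intros E. rewrite E in Hs. lra. }
    apply Rabs_def2 in H. lra.
  - exists q. split; [lra|auto].
Qed.

Lemma transfer1 (F G : R -> R) (C z0 : R) : C > 0 ->
  (forall z, z0 < z -> is_derive F z (- C * G z)) ->
  filterlim F (Rbar_locally p_infty) (locally 0) ->
  forall l p s lo, z0 <= lo -> alt F s lo (p :: l) ->
  exists l', length l' = length (p :: l) /\ alt G s p l'.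
Proof.
  intros HC Hd Hl. induction l as [|p2 l IH]; intros p s lo Hlo Halt.
  - simpl in Halt. destruct Halt as [Hp [Hs _]].
    destruct (tail_sign F G C z0 p s HC Hd Hl) as [q [Hq Hq']]; [lra|auto|].
    exists (q :: nil). simpl. repeat split; auto.
  - simpl in Halt. destruct Halt as [Hp [Hs [Hp2 [Hs2 Halt]]]].
    destruct (IH p2 (- s) p) as [l'' [Hlen Halt'']]; [lra| simpl; auto|].
    destruct (MVT_sign F G C p p2 s HC Hp2) as [q [Hq Hq']].
    + intros z Hz. apply Hd. lra.
    + intros z Hz. apply (cont_pt_of_derive F z (- C * G z)). apply Hd. lra.
    + nra.
    + exists (q :: l''). split; [simpl; simpl in Hlen; lia|].
      simpl. split; [lra|]. split; auto. apply alt_weaken with p2; auto. lra.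
Qed.

Lemma zero1 (F G : R -> R) (C y : R) : C > 0 ->
  (forall z, y < z -> is_derive F z (- C * G z)) ->
  (forall z, y < z -> F z = 0) -> (forall z, y < z -> G z = 0).
Proof.
  intros HC Hd H0 z Hz.
  assert (E1 : Derive F z = - C * G z) by (apply is_derive_unique; apply Hd; auto).
  assert (E2 : Derive F z = 0).
  { apply is_derive_unique. apply (is_derive_ext_loc (fun _ => 0)).
    - exists (mkposreal (z - y) ltac:(lra)). intros t Ht.
      unfold ball in Ht; simpl in Ht; unfold AbsRing_ball, abs, minus, plus, opp in Ht; simpl in Ht.
      apply Rabs_def2 in Ht. symmetry. apply H0. lra.
    - apply is_derive_Reals. apply derivable_pt_lim_const. }
  rewrite E1 in E2. nra.
Qed.

Section Family.
Variable D : nat -> R -> R -> R.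
Variable C : nat -> R.
Variable mu : nat -> R -> R.
Variable z0 : R.
Hypothesis HC : forall k, C k > 0.
Hypothesis Hmu : forall k lam, lam > 0 -> mu k lam > 0.
Hypothesis Hd : forall k lam, lam > 0 -> forall z, z0 < z ->
  is_derive (D (S k) lam) z (- C k * D k (mu k lam) z).
Hypothesis Hl : forall k lam, lam > 0 -> filterlim (D (S k) lam) (Rbar_locally p_infty) (locally 0).

Lemma transfer_all : forall k lam s lo p l, lam > 0 -> z0 <= lo ->
  alt (D k lam) s lo (p :: l) ->
  exists lam' l', lam' > 0 /\ length l' = length (p :: l) /\ alt (D 0 lam') s lo l'.
Proof.
  induction k as [|k IH]; intros lam s lo p l Hlam Hlo Halt.
  - exists lam, (p :: l). auto.
  - destruct (transfer1 (D (S k) lam) (D k (mu k lam)) (C k) z0 (HC k) (Hd k lam Hlam) (Hl k lam Hlam)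
                l p s lo Hlo Halt) as [l' [Hlen Halt']].
    destruct l' as [|q l'']; [simpl in Hlen; discriminate|].
    destruct (IH (mu k lam) s p q l'' (Hmu k lam Hlam)) as [lam' [l3 [H1 [H2 H3]]]].
    + simpl in Halt. lra.
    + exact Halt'.
    + exists lam', l3. split; auto. split; [rewrite H2; auto|].
      apply alt_weaken with p; auto. simpl in Halt. lra.
Qed.

Lemma zero_all : forall k lam y, lam > 0 -> z0 <= y ->
  (forall z, y < z -> D k lam z = 0) -> exists lam', lam' > 0 /\ forall z, y < z -> D 0 lam' z = 0.
Proof.
  induction k as [|k IH]; intros lam y Hlam Hy H0.
  - exists lam. auto.
  - apply (IH (mu k lam) y (Hmu k lam Hlam) Hy).
    apply (zero1 (D (S k) lam) (D k (mu k lam)) (C k) y (HC k)); auto.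
    intros z Hz. apply Hd; auto. lra.
Qed.
End Family.


Section Base.
Variables ap al th1 th2 a b lam : R.
Hypothesis Hal : 1 < al.
Hypothesis Hap : al < ap.
Hypothesis Hth1 : 0 < th1.
Hypothesis Hth2 : 0 < th2.
Hypothesis Ha : 0 < a.
Hypothesis Hlam : 0 < lam.

Let KX := Rpower th1 ap * Gamma_fun ap.
Let KY := Rpower th2 al * Gamma_fun al.

Definition D0 (z : R) := gamma_density ap th1 z - lam * gamma_density al th2 (a * z + b).

Definition L (z : R) := ((ap - 1) * ln z + (- z / th1) - ln KX) -
   (ln lam + ((al - 1) * ln (a * z + b) + (- (a * z + b) / th2) - ln KY)).

Definition dL (z : R) := (ap - 1) / z - / th1 - (al - 1) * a / (a * z + b) + a / th2.

Definition kk := a / th2 - / th1.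
Definition Q (z : R) := (ap - 1) * (a * z + b) - (al - 1) * a * z + kk * z * (a * z + b).

Lemma D0_L (z : R) : 0 < z -> 0 < a * z + b ->
  D0 z = exp ((ap - 1) * ln z + (- z / th1) - ln KX) -
         exp (ln lam + ((al - 1) * ln (a * z + b) + (- (a * z + b) / th2) - ln KY)).
Proof.
  intros Hz Hw. unfold D0. rewrite !gd_log by lra. rewrite exp_plus, exp_ln by auto.
  reflexivity.
Qed.

Lemma sign_D0_L (z s : R) : 0 < z -> 0 < a * z + b -> s * D0 z > 0 -> s * L z > 0.
Proof.
  intros Hz Hw Hs. rewrite D0_L in Hs by auto. unfold L.
  set (u := (ap - 1) * ln z + - z / th1 - ln KX) in *.
  set (v := ln lam + ((al - 1) * ln (a * z + b) + - (a * z + b) / th2 - ln KY)) in *.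
  destruct (Rtotal_order u v) as [H|[H|H]].
  - pose proof (exp_increasing _ _ H). nra.
  - rewrite H in Hs. nra.
  - pose proof (exp_increasing _ _ H). nra.
Qed.

Lemma zero_D0_L (z : R) : 0 < z -> 0 < a * z + b -> D0 z = 0 -> L z = 0.
Proof.
  intros Hz Hw Hs. rewrite D0_L in Hs by auto. unfold L.
  apply Rminus_diag_uniq in Hs. apply exp_inv in Hs. lra.
Qed.

Lemma L_deriv (z : R) : 0 < z -> 0 < a * z + b -> is_derive L z (dL z).
Proof.
  intros Hz Hw. unfold L, dL. auto_derive.
  - repeat split; auto.
  - field. repeat split; lra.
Qed.

Lemma dL_Q (z : R) : 0 < z -> 0 < a * z + b -> dL z * (z * (a * z + b)) = Q z.
Proof.
  intros Hz Hw. unfold dL, Q, kk. field. repeat split; lra.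
Qed.

Lemma alt_D0_L : forall l s lo, 0 <= lo -> 0 <= a * lo + b -> alt D0 s lo l -> alt L s lo l.
Proof.
  induction l as [|p l IH]; intros s lo H1 H2 Halt; simpl in *; auto.
  destruct Halt as [Hp [Hs Halt]]. split; auto. split.
  - apply sign_D0_L; auto; nra.
  - apply IH; auto; nra.
Qed.

Lemma L_mvt (p1 p2 : R) (lo : R) : 0 <= lo -> 0 <= a * lo + b -> lo < p1 < p2 ->
  exists q, p1 < q < p2 /\ L p2 - L p1 = dL q * (p2 - p1).
Proof.
  intros H1 H2 Hp. apply MVT_open; [lra| |].
  - intros c Hc. apply L_deriv; nra.
  - intros c Hc. apply (cont_pt_of_derive L c (dL c)). apply L_deriv; nra.
Qed.

Lemma Q_sign_from_L (p1 p2 lo s : R) : 0 <= lo -> 0 <= a * lo + b -> lo < p1 < p2 ->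
  s * L p1 > 0 -> - s * L p2 > 0 -> exists q, p1 < q < p2 /\ s * Q q < 0.
Proof.
  intros H1 H2 Hp Hs1 Hs2. destruct (L_mvt p1 p2 lo H1 H2 Hp) as [q [Hq E]].
  exists q. split; auto.
  assert (Hw : 0 < a * q + b) by nra.
  rewrite <- dL_Q by lra.
  assert (s * dL q < 0).
  { assert (s * (L p2 - L p1) < 0) by nra. rewrite E in H. nra. }
  assert (0 < q * (a * q + b)) by nra. nra.
Qed.

Lemma baseA (lo : R) (l : list R) : 0 <= b -> 0 <= lo -> length l = 3%nat -> alt D0 1 lo l -> False.
Proof.
  intros Hb Hlo Hlen Halt.
  apply alt_D0_L in Halt; [|lra|nra].
  destruct l as [|p1 [|p2 [|p3 [|p4 l]]]]; simpl in Hlen; try discriminate.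
  simpl in Halt. destruct Halt as [Hp1 [Hs1 [Hp2 [Hs2 [Hp3 [Hs3 _]]]]]].
  destruct (Q_sign_from_L p1 p2 lo 1) as [q1 [Hq1 HQ1]]; try lra; try nra.
  destruct (Q_sign_from_L p2 p3 lo (-1)) as [q2 [Hq2 HQ2]]; try lra; try nra.
  unfold Q in HQ1, HQ2.
  destruct (Rle_lt_dec 0 kk) as [Hk|Hk].
  - assert (0 < q1) by lra. 
    assert (0 <= kk * q1 * (a * q1 + b)) by (apply Rmult_le_pos; [apply Rmult_le_pos; lra | nra]).
    assert (E : (ap - 1) * (a * q1 + b) - (al - 1) * a * q1 = (ap - al) * (a * q1) + (ap - 1) * b) by ring.
    assert (0 < (ap - al) * (a * q1)) by (apply Rmult_lt_0_compat; [lra|apply Rmult_lt_0_compat; lra]).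
    assert (0 <= (ap - 1) * b) by (apply Rmult_le_pos; lra). lra.
  - set (Q1 := (ap - 1) * (a * q1 + b) - (al - 1) * a * q1 + kk * q1 * (a * q1 + b)) in *.
    set (Q2 := (ap - 1) * (a * q2 + b) - (al - 1) * a * q2 + kk * q2 * (a * q2 + b)) in *.
    assert (E : q2 * Q1 - q1 * Q2 = (q2 - q1) * ((ap - 1) * b - kk * a * q1 * q2)) by (unfold Q1, Q2; ring).
    assert (0 <= (ap - 1) * b - kk * a * q1 * q2).
    { assert (0 <= (ap - 1) * b) by nra. assert (0 < a * q1 * q2) by (apply Rmult_lt_0_compat; nra). nra. }
    assert (0 <= q2 * Q1 - q1 * Q2) by (rewrite E; apply Rmult_le_pos; lra).
    assert (0 < q1 * Q2) by nra.
    nra.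
Qed.

Lemma baseB (l : list R) : b < 0 -> length l = 4%nat -> alt D0 (-1) (- b / a) l -> False.
Proof.
  intros Hb Hlen Halt.
  set (z0 := - b / a) in *.
  assert (Hz0 : 0 < z0) by (unfold z0; apply Rdiv_lt_0_compat; lra).
  assert (Ez0 : a * z0 + b = 0) by (unfold z0; field; lra).
  apply alt_D0_L in Halt; [|lra|lra].
  destruct l as [|p1 [|p2 [|p3 [|p4 [|p5 l]]]]]; simpl in Hlen; try discriminate.
  simpl in Halt. destruct Halt as [Hp1 [Hs1 [Hp2 [Hs2 [Hp3 [Hs3 [Hp4 [Hs4 _]]]]]]]].
  assert (S1 : L p1 < 0) by lra. assert (S2 : L p2 > 0) by lra.
  assert (S3 : L p3 < 0) by lra. assert (S4 : L p4 > 0) by lra.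
  destruct (Q_sign_from_L p1 p2 z0 (-1) ltac:(lra) ltac:(lra) ltac:(lra) ltac:(lra) ltac:(lra)) as [q1 [Hq1 HQ1]].
  destruct (Q_sign_from_L p2 p3 z0 1 ltac:(lra) ltac:(lra) ltac:(lra) ltac:(lra) ltac:(lra)) as [q2 [Hq2 HQ2]].
  destruct (Q_sign_from_L p3 p4 z0 (-1) ltac:(lra) ltac:(lra) ltac:(lra) ltac:(lra) ltac:(lra)) as [q3 [Hq3 HQ3]].
  assert (Hb' : b = - a * z0) by lra.
  set (u1 := q1 - z0). set (u2 := q2 - z0). set (u3 := q3 - z0).
  set (R := fun u => kk * u * u + (ap - al + kk * z0) * u - (al - 1) * z0).
  assert (EQ : forall q, Q q = a * R (q - z0)).
  { intros q. unfold Q, R. rewrite Hb'. ring. }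
  rewrite EQ in HQ1, HQ2, HQ3.
  assert (R1 : R u1 > 0) by (unfold u1; nra).
  assert (R2 : R u2 < 0) by (unfold u2; nra).
  assert (R3 : R u3 > 0) by (unfold u3; nra).
  assert (0 < u1 < u2) by (unfold u1, u2; lra).
  assert (u2 < u3) by (unfold u2, u3; lra).
  destruct (Rle_lt_dec kk 0) as [Hk|Hk].
  - assert (E : (u3 - u1) * R u2 - (u3 - u2) * R u1 - (u2 - u1) * R u3 =
                - kk * ((u2 - u1) * (u3 - u2) * (u3 - u1))) by (unfold R; ring).
    assert (0 <= (u2 - u1) * (u3 - u2) * (u3 - u1)) by (apply Rmult_le_pos; [apply Rmult_le_pos|]; lra).
    assert (0 <= - kk * ((u2 - u1) * (u3 - u2) * (u3 - u1))) by nra.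
    assert (0 < (u3 - u2) * R u1) by (apply Rmult_lt_0_compat; lra).
    assert (0 < (u2 - u1) * R u3) by (apply Rmult_lt_0_compat; lra).
    assert ((u3 - u1) * R u2 < 0) by nra.
    lra.
  - assert (E : u2 * R u1 - (u2 - u1) * R 0 - u1 * R u2 = kk * u1 * u2 * (u1 - u2)) by (unfold R; ring).
    assert (R0 : R 0 < 0) by (unfold R; nra).
    assert (kk * u1 * u2 * (u1 - u2) < 0).
    { assert (0 < kk * u1 * u2) by (apply Rmult_lt_0_compat; [apply Rmult_lt_0_compat|]; lra). nra. }
    assert ((u2 - u1) * R 0 < 0) by nra.
    assert (u1 * R u2 < 0) by nra.
    assert (u2 * R u1 > 0) by nra.
    lra.
Qed.

Lemma baseZ (y : R) : 0 <= y -> 0 <= a * y + b -> (forall z, y < z -> D0 z = 0) -> False.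
Proof.
  intros Hy Hwy H0.
  assert (HL : forall z, y < z -> L z = 0).
  { intros z Hz. apply zero_D0_L; [lra|nra|auto]. }
  assert (HdL : forall z, y < z -> dL z = 0).
  { intros z Hz. 
    assert (H := zero1 L (fun z => - dL z) 1 y ltac:(lra)).
    assert (- dL z = 0).
    { apply H; auto. intros t Ht. replace (- (1) * - dL t) with (dL t) by ring. apply L_deriv; nra. }
    lra. }
  assert (HQ : forall z, y < z -> Q z = 0).
  { intros z Hz. rewrite <- dL_Q by nra. rewrite HdL; auto. ring. }
  pose proof (HQ (y + 1) ltac:(lra)). pose proof (HQ (y + 2) ltac:(lra)). pose proof (HQ (y + 3) ltac:(lra)).
  unfold Q in *.
  assert (kk * a = 0) by nra.
  assert (kk = 0) by nra.
  rewrite H4 in H1, H2. nra.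
Qed.

End Base.


Lemma lim_comb (g1 g2 : R -> R) (lam a b : R) : 0 < a ->
  filterlim g1 (Rbar_locally p_infty) (locally 0) ->
  filterlim g2 (Rbar_locally p_infty) (locally 0) ->
  filterlim (fun z => g1 z - lam * g2 (a * z + b)) (Rbar_locally p_infty) (locally 0).
Proof.
  intros Ha H1 H2 P [eps HP].
  pose proof (cond_pos eps) as He.
  assert (He1 : 0 < eps / 2) by lra.
  assert (He2 : 0 < eps / (2 * (Rabs lam + 1))) by (apply Rdiv_lt_0_compat; [lra|pose proof (Rabs_pos lam); lra]).
  destruct (H1 (fun y => Rabs y < eps / 2)) as [M1 HM1].
  { exists (mkposreal _ He1). intros y Hy. unfold ball in Hy; simpl in Hy.
    unfold AbsRing_ball, abs, minus, plus, opp in Hy; simpl in Hy. rewrite Ropp_0, Rplus_0_r in Hy. exact Hy. }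
  destruct (H2 (fun y => Rabs y < eps / (2 * (Rabs lam + 1)))) as [M2 HM2].
  { exists (mkposreal _ He2). intros y Hy. unfold ball in Hy; simpl in Hy.
    unfold AbsRing_ball, abs, minus, plus, opp in Hy; simpl in Hy. rewrite Ropp_0, Rplus_0_r in Hy. exact Hy. }
  exists (Rmax M1 ((M2 - b) / a)). intros z Hz.
  pose proof (Rmax_l M1 ((M2 - b) / a)). pose proof (Rmax_r M1 ((M2 - b) / a)).
  assert (Hw : M2 < a * z + b).
  { assert ((M2 - b) / a < z) by lra.
    apply Rmult_lt_compat_l with (r := a) in H3; auto.
    replace (a * ((M2 - b) / a)) with (M2 - b) in H3 by (field; lra). lra. }
  specialize (HM1 z ltac:(lra)). specialize (HM2 _ Hw).
  apply HP. unfold ball; simpl; unfold AbsRing_ball, abs, minus, plus, opp; simpl.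
  rewrite Ropp_0, Rplus_0_r.
  eapply Rle_lt_trans. apply Rabs_triang. rewrite Rabs_Ropp, Rabs_mult.
  assert (Rabs lam * Rabs (g2 (a * z + b)) <= (Rabs lam + 1) * (eps / (2 * (Rabs lam + 1)))).
  { pose proof (Rabs_pos lam). pose proof (Rabs_pos (g2 (a * z + b))).
    apply Rmult_le_compat; lra. }
  replace ((Rabs lam + 1) * (eps / (2 * (Rabs lam + 1)))) with (eps / 2) in H3
    by (field; pose proof (Rabs_pos lam); lra).
  lra.
Qed.

Section Main.
Variables ap al th1 th2 : R.
Hypothesis Hal : 1 < al.
Hypothesis Hap : al < ap.
Hypothesis Hth1 : 0 < th1.
Hypothesis Hth2 : 0 < th2.

Definition fX := gamma_density ap th1.
Definition fY := gamma_density al th2.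
Definition TX k := tailT fX k.
Definition TY k := tailT fY k.
Definition mX k := int_from (TX k) 0.
Definition mY k := int_from (TY k) 0.

Lemma factsX : forall k, exists A', Good (TX k) A' (/ (2 * th1)) /\ 0 < mX k /\
    (forall x, x <= 0 -> TX (S k) x = 1) /\
    (forall x, 0 < x -> is_derive (TX (S k)) x (- TX k x / mX k)) /\
    (forall x y, 0 <= x < y -> TX (S k) y < TX (S k) x).
Proof.
  destruct (gd_good ap th1 ltac:(lra) Hth1) as [A HA].
  apply (tail_all fX A); auto.
  - apply Rlt_gt, Rinv_0_lt_compat; lra.
  - apply gd_int; auto; lra.
Qed.

Lemma factsY : forall k, exists A', Good (TY k) A' (/ (2 * th2)) /\ 0 < mY k /\
    (forall x, x <= 0 -> TY (S k) x = 1) /\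
    (forall x, 0 < x -> is_derive (TY (S k)) x (- TY k x / mY k)) /\
    (forall x y, 0 <= x < y -> TY (S k) y < TY (S k) x).
Proof.
  destruct (gd_good al th2 ltac:(lra) Hth2) as [A HA].
  apply (tail_all fY A); auto.
  - apply Rlt_gt, Rinv_0_lt_compat; lra.
  - apply gd_int; auto; lra.
Qed.

Lemma contX k x : continuous (TX k) x.
Proof. destruct (factsX k) as [A [[H _] _]]. apply H. Qed.
Lemma contY k x : continuous (TY k) x.
Proof. destruct (factsY k) as [A [[H _] _]]. apply H. Qed.
Lemma limX k : filterlim (TX k) (Rbar_locally p_infty) (locally 0).
Proof. destruct (factsX k) as [A [H _]]. apply (good_lim0 _ A (/ (2 * th1))); auto.
  apply Rlt_gt, Rinv_0_lt_compat; lra. Qed.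
Lemma limY k : filterlim (TY k) (Rbar_locally p_infty) (locally 0).
Proof. destruct (factsY k) as [A [H _]]. apply (good_lim0 _ A (/ (2 * th2))); auto.
  apply Rlt_gt, Rinv_0_lt_compat; lra. Qed.
Lemma posX k x : 0 < x -> 0 < TX k x.
Proof. destruct (factsX k) as [A [[_ [H _]] _]]. apply H. Qed.
Lemma mXpos k : 0 < mX k.
Proof. destruct (factsX k) as [A [_ [H _]]]. exact H. Qed.
Lemma mYpos k : 0 < mY k.
Proof. destruct (factsY k) as [A [_ [H _]]]. exact H. Qed.
Lemma oneX k x : x <= 0 -> TX (S k) x = 1.
Proof. destruct (factsX k) as [A [_ [_ [H _]]]]. apply H. Qed.
Lemma oneY k x : x <= 0 -> TY (S k) x = 1.
Proof. destruct (factsY k) as [A [_ [_ [H _]]]]. apply H. Qed.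
Lemma derX k x : 0 < x -> is_derive (TX (S k)) x (- TX k x / mX k).
Proof. destruct (factsX k) as [A [_ [_ [_ [H _]]]]]. apply H. Qed.
Lemma derY k x : 0 < x -> is_derive (TY (S k)) x (- TY k x / mY k).
Proof. destruct (factsY k) as [A [_ [_ [_ [H _]]]]]. apply H. Qed.
Lemma decX k x y : 0 <= x < y -> TX (S k) y < TX (S k) x.
Proof. destruct (factsX k) as [A [_ [_ [_ [_ H]]]]]. apply H. Qed.
Lemma decY k x y : 0 <= x < y -> TY (S k) y < TY (S k) x.
Proof. destruct (factsY k) as [A [_ [_ [_ [_ H]]]]]. apply H. Qed.

Section Chord.
Variables a b : R.
Hypothesis Ha : 0 < a.

Definition DD (k : nat) (lam z : R) := TX k z - lam * TY k (a * z + b).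
Definition CC (k : nat) := / mX k.
Definition MU (k : nat) (lam : R) := lam * a * mX k / mY k.

Lemma CC_pos k : CC k > 0.
Proof. unfold CC. apply Rlt_gt, Rinv_0_lt_compat, mXpos. Qed.

Lemma MU_pos k lam : lam > 0 -> MU k lam > 0.
Proof. intros. unfold MU. pose proof (mXpos k). pose proof (mYpos k).
  apply Rlt_gt. apply Rdiv_lt_0_compat; auto. apply Rmult_lt_0_compat; [apply Rmult_lt_0_compat|]; lra. Qed.

Lemma DD_deriv (z0 : R) : 0 <= z0 -> 0 <= a * z0 + b ->
  forall k lam, lam > 0 -> forall z, z0 < z ->
  is_derive (DD (S k) lam) z (- CC k * DD k (MU k lam) z).
Proof.
  intros H1 H2 k lam Hlam z Hz.
  assert (Hz0 : 0 < z) by lra. assert (Hw : 0 < a * z + b) by nra.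
  pose proof (mXpos k). pose proof (mYpos k).
  apply is_derive_Reals.
  pose proof (proj1 (is_derive_Reals _ _ _) (derX k z Hz0)) as HX.
  pose proof (proj1 (is_derive_Reals _ _ _) (derY k (a * z + b) Hw)) as HY.
  assert (Hlin : derivable_pt_lim (fun z => a * z + b) z a).
  { apply is_derive_Reals. auto_derive. exact I. ring. }
  pose proof (derivable_pt_lim_comp _ _ _ _ _ Hlin HY) as HYc.
  pose proof (derivable_pt_lim_scal _ lam _ _ HYc) as HYs.
  pose proof (derivable_pt_lim_minus _ _ _ _ _ HX HYs) as HD.
  unfold DD, CC, MU.
  replace (- / mX k * (TX k z - lam * a * mX k / mY k * TY k (a * z + b)))
    with (- TX k z / mX k - lam * (- TY k (a * z + b) / mY k * a)) by (field; lra).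
  exact HD.
Qed.

Lemma DD_lim k lam : filterlim (DD (S k) lam) (Rbar_locally p_infty) (locally 0).
Proof. apply lim_comb; auto; [apply limX|apply limY]. Qed.

Lemma DD_cont k lam z : continuity_pt (DD k lam) z.
Proof.
  unfold DD. apply continuity_pt_minus.
  - apply cont_pt_of. apply contX.
  - apply continuity_pt_scal. apply (continuity_pt_comp (fun z => a * z + b) (TY k)).
    + apply cont_pt_of. apply cont_of_derive. auto_derive. exact I.
    + apply cont_pt_of. apply contY.
Qed.

End Chord.

Lemma key (s' : nat) (c : R -> R) : is_sIFR_comparison fX fY (S s') c ->
  forall x y z, 0 <= x < z -> z < y -> c z <= c x + (c y - c x) / (y - x) * (z - x).
Proof.
  intros Hc x y z [Hx Hxz] Hzy.
  destruct (Hc x Hx) as [Hcx Ex]. destruct (Hc y ltac:(lra)) as [Hcy Ey].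
  destruct (Hc z ltac:(lra)) as [Hcz Ez].
  change (TY (S s') (c x) = TX (S s') x) in Ex.
  change (TY (S s') (c y) = TX (S s') y) in Ey.
  change (TY (S s') (c z) = TX (S s') z) in Ez.
  assert (Hmono : c x < c y).
  { destruct (Rtotal_order (c x) (c y)) as [H|[H|H]]; auto.
    - exfalso. pose proof (decX s' x y ltac:(lra)). rewrite <- Ex, <- Ey, H in H0. lra.
    - exfalso. pose proof (decX s' x y ltac:(lra)). pose proof (decY s' (c y) (c x) ltac:(lra)). lra. }
  apply Rnot_lt_le. intros Hcon.
  set (a := (c y - c x) / (y - x)) in *.
  assert (Ha : 0 < a) by (unfold a; apply Rdiv_lt_0_compat; lra).
  set (b := c x - a * x).
  assert (Eax : a * x + b = c x) by (unfold b; ring).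
  assert (Eay : a * y + b = c y) by (unfold b, a; field; lra).
  assert (Eaz : a * z + b = c x + a * (z - x)) by (unfold b; ring).
  set (F := DD a b (S s') 1).
  set (G := DD a b s' (MU a s' 1)).
  assert (Fx : F x = 0) by (unfold F, DD; rewrite Eax, Ex; ring).
  assert (Fy : F y = 0) by (unfold F, DD; rewrite Eay, Ey; ring).
  assert (Fz : F z < 0).
  { unfold F, DD. rewrite <- Ez. 
    assert (TY (S s') (c z) < TY (S s') (a * z + b)).
    { apply decY. split; [|lra]. rewrite Eaz. assert (0 < a * (z - x)) by (apply Rmult_lt_0_compat; lra). lra. }
    lra. }
  assert (HMU : MU a s' 1 > 0) by (apply MU_pos; lra).
  assert (Gen : forall z0, 0 <= z0 -> z0 <= x -> 0 <= a * z0 + b ->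
     exists q1 q2 q3, x < q1 < z /\ z < q2 < y /\ y < q3 /\ G q1 > 0 /\ G q2 < 0 /\ G q3 > 0).
  { intros z0 Hz0 Hz0x Hz0b.
    assert (Hder : forall t, z0 < t -> is_derive F t (- CC s' * G t)).
    { intros t Ht. apply (DD_deriv a b Ha z0 Hz0 Hz0b s' 1 ltac:(lra) t Ht). }
    destruct (MVT_sign F G (CC s') x z 1 (CC_pos s') Hxz) as [q1 [Hq1 Hq1']].
    { intros t Ht. apply Hder. lra. }
    { intros t Ht. apply DD_cont. }
    { lra. }
    destruct (MVT_sign F G (CC s') z y (-1) (CC_pos s') Hzy) as [q2 [Hq2 Hq2']].
    { intros t Ht. apply Hder. lra. }
    { intros t Ht. apply DD_cont. }
    { lra. }
    assert (Hq3 : exists q3, y < q3 /\ G q3 > 0).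
    { destruct (classic (exists w, y < w /\ F w <> 0)) as [[w [Hw HFw]]|Hno].
      - destruct (Rtotal_order (F w) 0) as [Hn|[Hn|Hn]]; [|contradiction|].
        + destruct (MVT_sign F G (CC s') y w 1 (CC_pos s') Hw) as [q [Hq Hq']].
          { intros t Ht. apply Hder. lra. }
          { intros t Ht. apply DD_cont. }
          { lra. }
          exists q. split; [lra|lra].
        + destruct (tail_sign F G (CC s') z0 w 1 (CC_pos s') Hder (DD_lim a b Ha s' 1)) as [q [Hq Hq']]; [lra|lra|].
          exists q. split; lra.
      - exfalso.
        assert (H0 : forall w, y < w -> DD a b (S s') 1 w = 0).
        { intros w Hw. apply NNPP. intros Hne. apply Hno. exists w. split; auto. }
        destruct (zero_all (DD a b) CC (MU a) z0 CC_pos (MU_pos a Ha) (DD_deriv a b Ha z0 Hz0 Hz0b)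
                   (S s') 1 y ltac:(lra) ltac:(lra) H0) as [lam' [Hlam' H0']].
        apply (baseZ ap al th1 th2 a b lam' Hal Hap Hth1 Hth2 Ha Hlam' y ltac:(lra) ltac:(nra)).
        intros t Ht. apply (H0' t Ht). }
    destruct Hq3 as [q3 [Hq3 Hq3']].
    exists q1, q2, q3. repeat split; lra. }
  destruct (Rle_lt_dec 0 b) as [Hb|Hb].
  - destruct (Gen x Hx (Rle_refl x) ltac:(lra)) as [q1 [q2 [q3 [H1 [H2 [H3 [G1 [G2 G3]]]]]]]].
    assert (Halt : alt (DD a b s' (MU a s' 1)) 1 x (q1 :: q2 :: q3 :: nil)).
    { simpl. fold G. repeat split; lra. }
    destruct (transfer_all (DD a b) CC (MU a) x CC_pos (MU_pos a Ha) (DD_deriv a b Ha x Hx ltac:(lra))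
                (fun k lam _ => DD_lim a b Ha k lam) s' (MU a s' 1) 1 x q1 (q2 :: q3 :: nil) HMU (Rle_refl x) Halt)
      as [lam' [l' [Hlam' [Hlen Halt']]]].
    apply (baseA ap al th1 th2 a b lam' Hal Hap Hth1 Hth2 Ha Hlam' x l' Hb Hx Hlen Halt').
  - set (z0 := - b / a).
    assert (Hz0 : 0 < z0) by (unfold z0; apply Rdiv_lt_0_compat; lra).
    assert (Ez0 : a * z0 + b = 0) by (unfold z0; field; lra).
    assert (Hz0x : z0 <= x).
    { apply Rnot_lt_le. intros Hl. assert (a * x + b < a * z0 + b) by nra. lra. }
    assert (Hz0x' : z0 < x).
    { destruct Hz0x as [H|H]; auto. exfalso.
      assert (c x = 0) by (rewrite <- Eax, <- H; exact Ez0).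
      rewrite H0 in Ex. rewrite oneY in Ex by lra.
      pose proof (decX s' 0 x ltac:(lra)). rewrite (oneX s' 0) in H1 by lra. lra. }
    destruct (Gen z0 (Rlt_le _ _ Hz0) Hz0x ltac:(lra)) as [q1 [q2 [q3 [H1 [H2 [H3 [G1 [G2 G3]]]]]]]].
    assert (Fz0 : F z0 < 0).
    { unfold F, DD. rewrite Ez0, oneY by lra.
      pose proof (decX s' 0 z0 ltac:(lra)). rewrite (oneX s' 0) in H by lra. lra. }
    destruct (MVT_sign F G (CC s') z0 x (-1) (CC_pos s') Hz0x') as [q0 [Hq0 Hq0']].
    { intros t Ht. apply (DD_deriv a b Ha z0 (Rlt_le _ _ Hz0) ltac:(lra) s' 1 ltac:(lra) t). lra. }
    { intros t Ht. apply DD_cont. }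
    { lra. }
    assert (Halt : alt (DD a b s' (MU a s' 1)) (-1) z0 (q0 :: q1 :: q2 :: q3 :: nil)).
    { simpl. fold G. repeat split; lra. }
    destruct (transfer_all (DD a b) CC (MU a) z0 CC_pos (MU_pos a Ha) (DD_deriv a b Ha z0 (Rlt_le _ _ Hz0) ltac:(lra))
                (fun k lam _ => DD_lim a b Ha k lam) s' (MU a s' 1) (-1) z0 q0 (q1 :: q2 :: q3 :: nil) HMU (Rle_refl z0) Halt)
      as [lam' [l' [Hlam' [Hlen Halt']]]].
    apply (baseB ap al th1 th2 a b lam' Hal Hap Hth1 Hth2 Ha Hlam' l' Hb Hlen Halt').
Qed.

End Main.


Theorem proposition1 (s : nat) (alpha' alpha theta1 theta2 : R) :
  (1 <= s)%nat -> 1 < alpha -> alpha < alpha' -> 0 < theta1 -> 0 < theta2 ->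
  more_sIFR (gamma_density alpha' theta1) (gamma_density alpha theta2) s.
Proof.
  intros Hs Hal Hap Hth1 Hth2.
  destruct s as [|s']; [lia|].
  change (more_sIFR (fX alpha' theta1) (fY alpha theta2) (S s')).
  split.
  - assert (Hex : forall x, exists y, 0 <= x -> 0 <= y /\ tailT (fY alpha theta2) (S s') y = tailT (fX alpha' theta1) (S s') x).
    { intros x. destruct (Rle_lt_dec 0 x) as [Hx|Hx].
      2: { exists 0. intros; lra. }
      set (v := TX alpha' theta1 (S s') x).
      assert (Hv1 : v <= 1).
      { unfold v. destruct Hx as [Hx|Hx].
        - pose proof (decX alpha' alpha theta1 Hal Hap Hth1 s' 0 x ltac:(lra)).
          rewrite (oneX alpha' alpha theta1 Hal Hap Hth1 s' 0) in H by lra. lra.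
        - subst x. rewrite (oneX alpha' alpha theta1 Hal Hap Hth1 s' 0) by lra. lra. }
      assert (Hv0 : 0 < v).
      { unfold v. destruct Hx as [Hx|Hx].
        - apply (posX alpha' alpha theta1 Hal Hap Hth1); auto.
        - subst x. rewrite (oneX alpha' alpha theta1 Hal Hap Hth1 s' 0) by lra. lra. }
      destruct (limY alpha theta2 Hal Hth2 (S s') (fun t => Rabs t < v)) as [M HM].
      { exists (mkposreal v Hv0). intros t Ht. unfold ball in Ht; simpl in Ht.
        unfold AbsRing_ball, abs, minus, plus, opp in Ht; simpl in Ht. rewrite Ropp_0, Rplus_0_r in Ht. exact Ht. }
      set (M' := Rmax M 0 + 1).
      assert (HM1 : M < M') by (unfold M'; pose proof (Rmax_l M 0); lra).
      assert (HM2 : 0 < M') by (unfold M'; pose proof (Rmax_r M 0); lra).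
      specialize (HM M' HM1). apply Rabs_def2 in HM.
      assert (HT0 : TY alpha theta2 (S s') 0 = 1) by (apply (oneY alpha theta2 Hal Hth2); lra).
      destruct (IVT_gen (TY alpha theta2 (S s')) 0 M' v) as [y [Hy1 Hy2]].
      { intros t. apply cont_pt_of. apply (contY alpha theta2 Hal Hth2). }
      { rewrite HT0. rewrite Rmin_right by lra. rewrite Rmax_left by lra. lra. }
      exists y. intros _. rewrite Rmin_left in Hy1 by lra. split; [lra|]. exact Hy2. }
    exists (fun x => proj1_sig (constructive_indefinite_description _ (Hex x))).
    intros x Hx. destruct (constructive_indefinite_description _ (Hex x)) as [y Hy]. simpl. auto.
  - intros c Hc x y t Hx Hy Ht.
    pose proof (key alpha' alpha theta1 theta2 Hal Hap Hth1 Hth2 s' c Hc) as K.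
    destruct (Req_dec t 0) as [->|Ht0].
    { replace (0 * x + (1 - 0) * y) with y by ring. lra. }
    destruct (Req_dec t 1) as [->|Ht1].
    { replace (1 * x + (1 - 1) * y) with x by ring. lra. }
    destruct (Rtotal_order x y) as [Hxy|[Hxy|Hxy]].
    + set (z := t * x + (1 - t) * y).
      assert (Hz1 : x < z) by (unfold z; nra). assert (Hz2 : z < y) by (unfold z; nra).
      specialize (K x y z (conj Hx Hz1) Hz2).
      replace ((c y - c x) / (y - x) * (z - x)) with ((1 - t) * (c y - c x)) in K by (unfold z; field; lra).
      lra.
    + subst y. replace (t * x + (1 - t) * x) with x by ring. lra.
    + set (z := t * x + (1 - t) * y).
      assert (Hz1 : y < z) by (unfold z; nra). assert (Hz2 : z < x) by (unfold z; nra).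
      specialize (K y x z (conj Hy Hz1) Hz2).
      replace ((c x - c y) / (x - y) * (z - y)) with (t * (c x - c y)) in K by (unfold z; field; lra).
      lra.
Qed.
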